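(* Let $\mathcal{H}_A$ be a two-dimensional complex Hilbert space and $\mathcal{H}_B,\mathcal{H}_C$ finite-dimensional complex Hilbert spaces. For every pure state $|\psi\rangle\langle\psi|$ on $\mathcal{H}_A\otimes\mathcal{H}_B\otimes\mathcal{H}_C$, $$L_{A:CB}-L_{AC:B}\le L_{AB:C},$$ where $L_{A:CB}$, $L_{AC:B}$, $L_{AB:C}$ are the logarithmic negativities of the state with respect to the bipartitions $A|BC$, $AC|B$ and $AB|C$ respectively.
   Context: For a bipartite state $\rho_{XY}$ on $\mathcal{H}_X\otimes\mathcal{H}_Y$, the logarithmic negativity is $L_{X:Y}=\log_2\|\rho_{XY}^{T_X}\|_1=\log_2(2N_{X:Y}+1)$, where $\rho_{XY}^{T_X}$ is the partial transpose with respect to $X$, $\|\sigma\|_1=\mathrm{Tr}\sqrt{\sigma^\dagger\sigma}$ is the trace norm, and $N_{X:Y}=\frac{\|\rho_{XY}^{T_X}\|_1-1}{2}$ is the negativity. *)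

(* Defs.v *)
From HB Require Import structures.
From mathcomp Require Import all_boot all_order all_algebra.
From mathcomp Require Import sesquilinear spectral.
From mathcomp Require Import complex.
From mathcomp Require Import reals exp.

Set Implicit Arguments.
Unset Strict Implicit.
Unset Printing Implicit Defensive.

Import Order.TTheory GRing.Theory Num.Theory.
Local Open Scope ring_scope.

Section QuantumDefs.
Variable R : realType.
Local Notation C := R[i].

Definition psd_sqrt n (A : 'M[C]_n) : 'M[C]_n :=
  invmx (spectralmx A) *m diag_mx (map_mx sqrtC (spectral_diag A))
    *m spectralmx A.

Definition trace_norm n (S : 'M[C]_n) : R :=
  complex.Re (\tr (psd_sqrt ((map_mx (fun z : C => z^*) S^T) *m S))).

(* Operators on the finite-dimensional Hilbert space C^T, T a finite type
   (basis indexed by T), represented as #|T| x #|T| matrices. *)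
Definition entry (T : finType) (A : 'M[C]_#|{: T}|) (x y : T) : C :=
  A (enum_rank x) (enum_rank y).

Definition mx_of (T : finType) (f : T -> T -> C) : 'M[C]_#|{: T}| :=
  \matrix_(i, j) f (enum_val i) (enum_val j).

Definition pure_dm (T : finType) (psi : T -> C) : 'M[C]_#|{: T}| :=
  mx_of (fun x y => psi x * (psi y)^*).

Definition ptranspose_fst (X Y : finType) (rho : 'M[C]_#|{: X * Y}|)
  : 'M[C]_#|{: X * Y}| :=
  mx_of (fun p q : X * Y => entry rho (q.1, p.2) (p.1, q.2)).

Definition log2 (x : R) : R := ln x / ln 2.

Definition log_negativity (X Y : finType) (rho : 'M[C]_#|{: X * Y}|) : R :=
  log2 (trace_norm (ptranspose_fst rho)).

End QuantumDefs.

(* Main.v *)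
Require Import Defs.
From HB Require Import structures.
From mathcomp Require Import all_boot all_order all_algebra.
From mathcomp Require Import sesquilinear spectral.
From mathcomp Require Import complex.
From mathcomp Require Import reals exp.
From mathcomp Require Import ring lra.
Import Order.TTheory GRing.Theory Num.Theory.
Local Open Scope ring_scope.
Set Implicit Arguments. Unset Strict Implicit.

Section Aux.
Variable R : realType.
Local Notation C := R[i].

Lemma sumEV (V : nmodType) (T : finType) (F : T -> V) :
  \sum_(i < #|{: T}|) F (enum_val i) = \sum_x F x.
Proof. by rewrite -(big_enum_val (A := {: T})); apply: eq_bigl => x; rewrite inE. Qed.

Lemma entry_mx_of (T : finType) (f : T -> T -> C) x y : entry (mx_of f) x y = f x y.
Proof. by rewrite /entry /mx_of mxE !enum_rankK. Qed.

Lemma mx_of_entry (T : finType) (A : 'M[C]_#|{: T}|) : mx_of (entry A) = A.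
Proof. by apply/matrixP => i j; rewrite /mx_of /entry mxE !enum_valK. Qed.

Lemma mx_of_mul (T : finType) (f g : T -> T -> C) :
  mx_of f *m mx_of g = mx_of (fun x z => \sum_y f x y * g y z).
Proof.
apply/matrixP => i j; rewrite mxE [in RHS]mxE -[in RHS]sumEV; apply: eq_bigr => k _.
by rewrite !mxE.
Qed.

Lemma mx_of_tr (T : finType) (f : T -> T -> C) : \tr (mx_of f) = \sum_x f x x.
Proof. by rewrite /mxtrace -[in RHS]sumEV; apply: eq_bigr => i _; rewrite mxE. Qed.

Lemma mx_of_ct (T : finType) (f : T -> T -> C) :
  map_mx (fun z : C => z^*) (mx_of f)^T = mx_of (fun x y => (f y x)^*).
Proof. by apply/matrixP => i j; rewrite !mxE. Qed.

Lemma mx_of_ext (T : finType) (f g : T -> T -> C) : (forall x y, f x y = g x y) -> mx_of f = mx_of g.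
Proof. by move=> fg; apply/matrixP => i j; rewrite !mxE fg. Qed.

Lemma entry_diag (T : finType) (d : 'rV[C]_#|{: T}|) x y :
  entry (diag_mx d) x y = (x == y)%:R * d 0 (enum_rank x).
Proof.
rewrite /entry mxE (inj_eq enum_rank_inj).
by case: eqP => [->|_]; rewrite ?mulr1n ?mul1r ?mulr0n ?mul0r.
Qed.


Lemma char_poly_conj n (A P Pi : 'M[C]_n) : Pi *m P = 1%:M ->
  char_poly (Pi *m A *m P) = char_poly A.
Proof.
move=> PiP.
have e : char_poly_mx (Pi *m A *m P) =
   map_mx polyC Pi *m char_poly_mx A *m map_mx polyC P.
  rewrite /char_poly_mx mulmxBr mulmxBl -!map_mxM; congr (_ - _).
  by rewrite -mulmxA -scalar_mxC mulmxA -map_mxM PiP map_mx1 mul1mx.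
rewrite /char_poly e !det_mulmx mulrC mulrA -det_mulmx -map_mxM.
by rewrite (mulmx1C PiP) map_mx1 det1 mul1r.
Qed.

Lemma char_poly_diag n (D : 'rV[C]_n) :
  char_poly (diag_mx D) = \prod_(i < n) ('X - (D 0 i)%:P).
Proof.
rewrite char_poly_trig ?diag_mx_is_trig //.
by apply: eq_bigr => i _; rewrite mxE eqxx mulr1n.
Qed.

Lemma spec_uniq n (D E : 'rV[C]_n) (P Pi Q Qi : 'M[C]_n) :
  Pi *m P = 1%:M -> Qi *m Q = 1%:M ->
  Pi *m diag_mx D *m P = Qi *m diag_mx E *m Q ->
  perm_eq [seq D 0 i | i <- enum 'I_n] [seq E 0 i | i <- enum 'I_n].
Proof.
move=> hP hQ eDE; apply: prod_XsubC_eq.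
have := congr1 char_poly eDE; rewrite !char_poly_conj // !char_poly_diag.
by rewrite !big_map.
Qed.

Lemma spec_sum n (D E : 'rV[C]_n) (P Pi Q Qi : 'M[C]_n) (f : C -> R) :
  Pi *m P = 1%:M -> Qi *m Q = 1%:M ->
  Pi *m diag_mx D *m P = Qi *m diag_mx E *m Q ->
  \sum_i f (D 0 i) = \sum_i f (E 0 i).
Proof.
move=> hP hQ eDE; have pe := @spec_uniq n D E P Pi Q Qi hP hQ eDE.
have := perm_big (op := +%R) (x := 0 : R) (P := xpredT) (F := f) _ pe.
by rewrite !big_map.
Qed.


Lemma ReD (x y : C) : complex.Re (x + y) = complex.Re x + complex.Re y.
Proof. by case: x; case: y. Qed.

Lemma Re_sum (I : finType) (F : I -> C) : complex.Re (\sum_i F i) = \sum_i complex.Re (F i).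
Proof. by rewrite (big_morph (@complex.Re R) ReD (erefl _)). Qed.

Lemma trace_norm_spec n (S : 'M[C]_n) :
  trace_norm S = \sum_i complex.Re (sqrtC
     (spectral_diag (map_mx (fun z : C => z^*) S^T *m S) 0 i)).
Proof.
rewrite /trace_norm /psd_sqrt mxtrace_mulC mulmxA mulmxV ?spectral_unit // mul1mx.
rewrite mxtrace_diag Re_sum; apply: eq_bigr => i _; by rewrite mxE.
Qed.

End Aux.

Section K.
Variable R : realType.
Local Notation C := R[i].

Lemma psd_normal n k (N : 'M[C]_(n, k)) : (N *m (map_mx Num.conj N^T)) \is normalmx.
Proof.
apply/normalmxP.
have -> : map_mx Num.conj (N *m map_mx Num.conj N^T)^T = N *m map_mx Num.conj N^T.
  by rewrite trmx_mul map_mxM trmxCK.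
by [].
Qed.

Lemma psd_spec n k (N : 'M[C]_(n, k)) i :
  0 <= spectral_diag (N *m (map_mx Num.conj N^T)) 0 i.
Proof.
pose H := N *m (map_mx Num.conj N^T).
have /orthomx_spectralP eH : H \is normalmx := psd_normal N.
set P := spectralmx H in eH; set d := spectral_diag H in eH *.
have Pu : P \is unitarymx := spectral_unitarymx H.
have PU := unitarymx_unit Pu.
have eD : diag_mx d = P *m H *m invmx P.
  by rewrite eH !mulmxA mulmxV // mul1mx -mulmxA mulmxV // mulmx1.
have := congr1 (fun A : 'M[C]_n => A i i) eD; rewrite mxE eqxx mulr1n => ->.
rewrite invmx_unitary // /H !mulmxA -mulmxA.
have -> : map_mx Num.conj N^T *m map_mx Num.conj P^T = map_mx Num.conj (P *m N)^T.
  by rewrite trmx_mul map_mxM.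
rewrite !mxE; apply: sumr_ge0 => j _; rewrite !mxE.
by rewrite mul_conjC_ge0.
Qed.


Section Bip.
Variables (X Y : finType) (M : X -> Y -> C).

Definition NAm : 'M[C]_(#|{: X}|, #|{: Y}|) := \matrix_(i, j) (M (enum_val i) (enum_val j))^*.
Definition NBm : 'M[C]_(#|{: Y}|, #|{: X}|) := \matrix_(i, j) M (enum_val j) (enum_val i).
Definition Am := NAm *m map_mx Num.conj NAm^T.
Definition Bm := NBm *m map_mx Num.conj NBm^T.

Lemma entry_Am x x' : entry Am x x' = \sum_y (M x y)^* * M x' y.
Proof.
rewrite /entry /Am !mxE -[in RHS]sumEV; apply: eq_bigr => j _.
by rewrite !mxE !enum_rankK conjCK.
Qed.

Lemma entry_Bm y y' : entry Bm y y' = \sum_x M x y * (M x y')^*.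
Proof.
rewrite /entry /Bm !mxE -[in RHS]sumEV; apply: eq_bigr => j _.
by rewrite !mxE !enum_rankK.
Qed.

Definition Kpt := ptranspose_fst (pure_dm (fun p : X * Y => M p.1 p.2)).

Lemma Kpt_eq : Kpt = mx_of (fun p q : X * Y => M q.1 p.2 * (M p.1 q.2)^*).
Proof. by rewrite /Kpt /ptranspose_fst; apply: mx_of_ext => p q; rewrite /pure_dm entry_mx_of. Qed.

Lemma KK_eq : map_mx (fun z : C => z^*) Kpt^T *m Kpt =
  mx_of (fun p q : X * Y => entry Am p.1 q.1 * entry Bm p.2 q.2).
Proof.
rewrite Kpt_eq mx_of_ct mx_of_mul; apply: mx_of_ext => p q.
rewrite entry_Am entry_Bm big_distrlr /= exchange_big pair_bigA /=.
apply: eq_bigr => r _; rewrite rmorphM /= conjCK; ring.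
Qed.


Lemma entry_mul (T : finType) (A B : 'M[C]_#|{: T}|) x z :
  entry (A *m B) x z = \sum_y entry A x y * entry B y z.
Proof. by rewrite -{1}(mx_of_entry A) -{1}(mx_of_entry B) mx_of_mul entry_mx_of. Qed.

Lemma entry1 (T : finType) (x y : T) : entry (1%:M : 'M[C]_#|{: T}|) x y = (x == y)%:R.
Proof. by rewrite /entry mxE (inj_eq enum_rank_inj). Qed.

Definition kron (f : X -> X -> C) (g : Y -> Y -> C) : X * Y -> X * Y -> C :=
  fun p q => f p.1 q.1 * g p.2 q.2.

Lemma kron_mul f1 g1 f2 g2 : mx_of (kron f1 g1) *m mx_of (kron f2 g2) =
  mx_of (kron (fun x z => \sum_y f1 x y * f2 y z) (fun x z => \sum_y g1 x y * g2 y z)).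
Proof.
rewrite mx_of_mul; apply: mx_of_ext => p q; rewrite /kron big_distrlr /= pair_bigA /=.
by apply: eq_bigr => r _; ring.
Qed.

Lemma Am_normal : Am \is normalmx. Proof. exact: psd_normal. Qed.
Lemma Bm_normal : Bm \is normalmx. Proof. exact: psd_normal. Qed.

Definition Pa := spectralmx Am.
Definition da := spectral_diag Am.
Definition Pb := spectralmx Bm.
Definition db := spectral_diag Bm.

Definition Qk := mx_of (kron (entry Pa) (entry Pb)).
Definition Qki := mx_of (kron (entry (invmx Pa)) (entry (invmx Pb))).
Definition ek : 'rV[C]_#|{: X * Y}| :=
  \row_i (da 0 (enum_rank (enum_val i).1) * db 0 (enum_rank (enum_val i).2)).

Lemma KK_dec : map_mx (fun z : C => z^*) Kpt^T *m Kpt = Qki *m diag_mx ek *m Qk.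
Proof.
have eA : Am = invmx Pa *m diag_mx da *m Pa by apply/orthomx_spectralP; exact: Am_normal.
have eB : Bm = invmx Pb *m diag_mx db *m Pb by apply/orthomx_spectralP; exact: Bm_normal.
have -> : diag_mx ek = mx_of (kron (entry (diag_mx da)) (entry (diag_mx db))).
  apply/matrixP => i j; rewrite !mxE /kron !entry_diag.
  rewrite -(inj_eq enum_val_inj).
  case: (enum_val i) => x y; case: (enum_val j) => x' y' /=.
  rewrite xpair_eqE; case: eqP => [->|_]; case: eqP => [->|_] /=;
    rewrite ?mulr1n ?mulr0n ?mul1r ?mul0r ?mulr0 //.
rewrite KK_eq /Qki /Qk !kron_mul; apply: mx_of_ext => p q.
rewrite /kron {1}eA {1}eB !entry_mul; congr (_ * _).
  by apply: eq_bigr => y _; rewrite entry_mul big_distrl.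
by apply: eq_bigr => y _; rewrite entry_mul big_distrl.
Qed.

Lemma Qk_inv : Qki *m Qk = 1%:M.
Proof.
rewrite /Qki /Qk kron_mul.
have hA : forall x z, \sum_y entry (invmx Pa) x y * entry Pa y z = (x == z)%:R.
  by move=> x z; rewrite -entry_mul mulVmx ?spectral_unit // entry1.
have hB : forall x z, \sum_y entry (invmx Pb) x y * entry Pb y z = (x == z)%:R.
  by move=> x z; rewrite -entry_mul mulVmx ?spectral_unit // entry1.
apply/matrixP => i j; rewrite !mxE /kron (hA (enum_val i).1 (enum_val j).1) (hB (enum_val i).2 (enum_val j).2).
rewrite -(inj_eq enum_val_inj).
case: (enum_val i) => x y; case: (enum_val j) => x' y' /=.
by rewrite xpair_eqE -natrM mulnb.
Qed.


Definition fR (z : C) : R := complex.Re (sqrtC z).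

Lemma ReM (u v : C) : complex.Re (u * v) = complex.Re u * complex.Re v - complex.Im u * complex.Im v.
Proof. by case: u => a b; case: v => c d. Qed.

Lemma fRM (a b : C) : 0 <= a -> 0 <= b -> fR (a * b) = fR a * fR b.
Proof.
move=> a0 b0; rewrite /fR sqrtCM ?nnegrE // ReM.
by rewrite !(@ger0_Im _ (sqrtC _)) ?sqrtC_ge0 // mulr0 subr0.
Qed.

Lemma sumER (V : nmodType) (T : finType) (G : 'I_#|{: T}| -> V) :
  \sum_x G (enum_rank x) = \sum_i G i.
Proof. by rewrite -sumEV; apply: eq_bigr => i _; rewrite enum_valK. Qed.

Lemma tn_Kpt : trace_norm Kpt =
  (\sum_(i < #|{: X}|) fR (da 0 i)) * (\sum_(j < #|{: Y}|) fR (db 0 j)).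
Proof.
rewrite trace_norm_spec.
set KK := map_mx _ Kpt^T *m Kpt.
have KKn : KK \is normalmx.
  have := psd_normal (map_mx (fun z : C => z^*) Kpt^T).
  by rewrite trmxCK.
have eK : KK = invmx (spectralmx KK) *m diag_mx (spectral_diag KK) *m spectralmx KK.
  by apply/orthomx_spectralP.
rewrite (@spec_sum R _ (spectral_diag KK) ek (spectralmx KK) (invmx (spectralmx KK)) Qk Qki fR).
- under eq_bigr do rewrite mxE.
  rewrite (sumEV (fun p : X * Y => fR (da 0 (enum_rank p.1) * db 0 (enum_rank p.2)))).
  rewrite -(pair_bigA _ (fun x y => fR (da 0 (enum_rank x) * db 0 (enum_rank y)))) /=.
  rewrite big_distrlr /=.
  rewrite -(sumER (fun i => \sum_(j < #|{: Y}|) fR (da 0 i) * fR (db 0 j))).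
  apply: eq_bigr => x _.
  rewrite -(sumER (fun j => fR (da 0 (enum_rank x)) * fR (db 0 j))).
  apply: eq_bigr => y _.
  by rewrite fRM // /da /db /Am /Bm psd_spec.
- by rewrite mulVmx // spectral_unit.
- exact: Qk_inv.
- by rewrite -eK /KK KK_dec.
Qed.

End Bip.
End K.

Section P5.
Variable R : realType.
Local Notation C := R[i].

Lemma sqrtC_real (r : R) : 0 <= r -> sqrtC ((r%:C)%C : C) = ((Num.sqrt r)%:C)%C.
Proof.
move=> h; rewrite -{1}(sqr_sqrtr h) rmorphXn sqrCK //.
by rewrite ler0c sqrtr_ge0.
Qed.

Lemma ge0_realC (x : C) : 0 <= x -> x = ((complex.Re x)%:C)%C.
Proof. by move=> h; rewrite RRe_real // ger0_real. Qed.

Lemma ge0_Re (x : C) : 0 <= x -> 0 <= complex.Re x.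
Proof. by move=> h; rewrite -ler0c -ge0_realC. Qed.

Lemma fR_ge0 (x : C) : 0 <= x -> fR x = Num.sqrt (complex.Re x).
Proof. by move=> h; rewrite /fR {1}(ge0_realC h) sqrtC_real ?ge0_Re. Qed.

Lemma Re_conj (z : C) : complex.Re (z^*) = complex.Re z.
Proof. by case: z. Qed.

Lemma ReM_real (x y : C) : 0 <= x -> 0 <= y -> complex.Re (x * y) = complex.Re x * complex.Re y.
Proof.
move=> hx hy; have := ger0_Im hx; have := ger0_Im hy.
by case: x hx => a b; case: y hy => c d /= _ _ -> ->; rewrite mulr0 subr0.
Qed.

Lemma tr_conj n (A P : 'M[C]_n) : P \in unitmx -> \tr (P *m A *m invmx P) = \tr A.
Proof. by move=> hP; rewrite mxtrace_mulC mulmxA mulVmx // mul1mx. Qed.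

Lemma tr_diag2 n (d : 'rV[C]_n) : \tr (diag_mx d *m diag_mx d) = \sum_(i < n) d 0 i * d 0 i.
Proof. by rewrite mulmx_diag mxtrace_diag; apply: eq_bigr => i _; rewrite mxE. Qed.

Lemma rank_diag_ge n (d : 'rV[C]_n) : (#|[set i | d 0%R i != 0%R]| <= \rank (diag_mx d))%N.
Proof.
set S := [set i | d 0 i != 0].
pose E : 'M[C]_(#|S|, n) := \matrix_(a, j) (enum_val a == j)%:R.
have eF : E *m diag_mx d *m E^T = diag_mx (\row_a d 0 (enum_val a)).
  apply/matrixP => a b; rewrite mul_mx_diag !mxE.
  rewrite (bigD1 (enum_val a)) //= big1 ?addr0; last first.
    by move=> j /negPf hj; rewrite !mxE eq_sym hj mul0r mul0r.
  rewrite !mxE eqxx mul1r (inj_eq enum_val_inj) eq_sym.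
  by case: (a == b); rewrite ?mulr1n ?mulr0n ?mulr1 ?mulr0.
have hu : (E *m diag_mx d *m E^T) \in unitmx.
  rewrite eF unitmxE det_diag unitfE; apply/prodf_neq0 => a _.
  rewrite mxE; have := enum_valP a; by rewrite inE.
have := mxrank_unit hu => hr.
apply: (leq_trans _ (mxrankM_maxr E (diag_mx d))).
by rewrite -{1}hr mxrankM_maxl.
Qed.


Lemma tr_mul_entry (T : finType) (A B : 'M[C]_#|{: T}|) :
  \tr (A *m B) = \sum_x \sum_y entry A x y * entry B y x.
Proof. by rewrite -(mx_of_entry A) -(mx_of_entry B) mx_of_mul mx_of_tr !mx_of_entry. Qed.

Lemma conj_sq n (P A : 'M[C]_n) : P \in unitmx ->
  (P *m A *m invmx P) *m (P *m A *m invmx P) = P *m (A *m A) *m invmx P.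
Proof. by move=> h; rewrite !mulmxA mulmxKV. Qed.

Section BipF.
Variables (X Y : finType) (M : X -> Y -> C).
Hypothesis hM : \sum_x \sum_y M x y * (M x y)^* = 1.

Definition Pur := \sum_x \sum_x' \sum_y \sum_y' M x y * (M x' y)^* * M x' y' * (M x y')^*.

Lemma diagA : diag_mx (da M) = Pa M *m Am M *m invmx (Pa M).
Proof.
have eA : Am M = invmx (Pa M) *m diag_mx (da M) *m Pa M.
  by apply/orthomx_spectralP; exact: Am_normal.
have PU : Pa M \in unitmx by exact: spectral_unit.
by rewrite eA !mulmxA mulmxV // mul1mx -mulmxA mulmxV // mulmx1.
Qed.

Lemma diagB : diag_mx (db M) = Pb M *m Bm M *m invmx (Pb M).
Proof.
have eB : Bm M = invmx (Pb M) *m diag_mx (db M) *m Pb M.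
  by apply/orthomx_spectralP; exact: Bm_normal.
have PU : Pb M \in unitmx by exact: spectral_unit.
by rewrite eB !mulmxA mulmxV // mul1mx -mulmxA mulmxV // mulmx1.
Qed.

Lemma sum_da : \sum_i da M 0 i = 1.
Proof.
rewrite -mxtrace_diag diagA tr_conj ?spectral_unit //.
rewrite -(mx_of_entry (Am M)) mx_of_tr -hM; apply: eq_bigr => x _.
by rewrite entry_Am; apply: eq_bigr => y _; rewrite mulrC.
Qed.

Lemma sum_db : \sum_i db M 0 i = 1.
Proof.
rewrite -mxtrace_diag diagB tr_conj ?spectral_unit //.
rewrite -(mx_of_entry (Bm M)) mx_of_tr -hM exchange_big; apply: eq_bigr => y _.
by rewrite entry_Bm.
Qed.

Lemma sum_da2 : \sum_i da M 0 i * da M 0 i = Pur^*.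
Proof.
rewrite -tr_diag2 diagA conj_sq ?spectral_unit // tr_conj ?spectral_unit //.
rewrite tr_mul_entry /Pur rmorph_sum; apply: eq_bigr => x _.
rewrite rmorph_sum; apply: eq_bigr => x' _.
rewrite !entry_Am big_distrlr rmorph_sum; apply: eq_bigr => y _.
rewrite rmorph_sum; apply: eq_bigr => y' _.
rewrite !rmorphM /= !conjCK; ring.
Qed.

Lemma sum_db2 : \sum_i db M 0 i * db M 0 i = Pur.
Proof.
rewrite -tr_diag2 diagB conj_sq ?spectral_unit // tr_conj ?spectral_unit //.
rewrite tr_mul_entry /Pur.
under eq_bigr do under eq_bigr do rewrite !entry_Bm big_distrlr /=.
under eq_bigr do rewrite exchange_big /=.
rewrite exchange_big /=; apply: eq_bigr => x _.
under eq_bigr do rewrite exchange_big /=.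
rewrite exchange_big /=; apply: eq_bigr => x' _.
apply: eq_bigr => y _; apply: eq_bigr => y' _; ring.
Qed.


Definition good k (s : 'I_k -> R) (p : R) :=
  [/\ forall i, 0 <= s i, \sum_i s i = 1 & \sum_i s i * s i = p].

Lemma Re_nat_sum k (F : 'I_k -> C) : \sum_i complex.Re (F i) = complex.Re (\sum_i F i).
Proof. by rewrite Re_sum. Qed.

Lemma good_of k (d : 'rV[C]_k) (p : C) : (forall i, 0 <= d 0 i) ->
  \sum_i d 0 i = 1 -> \sum_i d 0 i * d 0 i = p ->
  good (fun i => complex.Re (d 0 i)) (complex.Re p).
Proof.
move=> h0 h1 h2; split.
- by move=> i; apply: ge0_Re.
- by rewrite Re_nat_sum h1.
- rewrite -h2 -Re_nat_sum; apply: eq_bigr => i _; by rewrite ReM_real.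
Qed.

Lemma bip_facts : exists (s : 'I_#|{: X}| -> R) (t : 'I_#|{: Y}| -> R),
  [/\ trace_norm (Kpt M) = (\sum_i Num.sqrt (s i)) * (\sum_j Num.sqrt (t j)),
      good s (complex.Re Pur), good t (complex.Re Pur),
      (#|[set i | s i != 0%R]| <= #|{: X}|)%N & (#|[set j | t j != 0%R]| <= #|{: X}|)%N].
Proof.
have hda i : 0 <= da M 0 i by exact: psd_spec.
have hdb i : 0 <= db M 0 i by exact: psd_spec.
exists (fun i => complex.Re (da M 0 i)), (fun j => complex.Re (db M 0 j)); split.
- rewrite tn_Kpt; congr (_ * _); apply: eq_bigr => i _; by rewrite fR_ge0.
- have -> : complex.Re Pur = complex.Re (Pur^*) by rewrite Re_conj.
  by apply: good_of => //; [exact: sum_da | rewrite sum_da2].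
- by apply: good_of => //; [exact: sum_db | rewrite sum_db2].
- by rewrite (leq_trans (max_card _)) // card_ord.
- apply: (@leq_trans #|[set j | db M 0 j != 0]|).
    apply: subset_leq_card; apply/subsetP => j; rewrite !inE.
    by apply: contra => /eqP ->.
  apply: (leq_trans (rank_diag_ge _)); rewrite diagB.
  apply: (leq_trans (mxrankM_maxl _ _)); apply: (leq_trans (mxrankM_maxr _ _)).
  apply: (leq_trans (mxrankM_maxl _ _)); exact: rank_leq_col.
Qed.

End BipF.
End P5.

Section P6.
Variable R : realType.

Lemma pair_sq k (w : 'I_k * 'I_k -> R) :
  (forall q, 0 <= w q) -> (forall q, w (q.2, q.1) = w q) -> (forall q, q.1 = q.2 -> w q = 0) ->
  2 * \sum_q w q * w q <= (\sum_q w q) ^+ 2.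
Proof.
move=> w0 wS wD; rewrite expr2 big_distrl /= mulr_sumr; apply: ler_sum => q _.
case: (eqVneq q.1 q.2) => [e|ne].
  by rewrite wD // !mul0r mulr0.
rewrite (bigD1 q) //= (bigD1 (q.2, q.1)) /=; last first.
  by apply/eqP; case: q ne => a b /= ne [] e; rewrite e eqxx in ne.
rewrite wS mulrDr mulrDr addrA.
have h : 0 <= w q * \sum_(i | (i != q) && (i != (q.2, q.1))) w i.
  by apply: mulr_ge0 => //; apply: sumr_ge0.
lra.
Qed.

Lemma sq_split k (a : 'I_k -> R) :
  (\sum_i a i) ^+ 2 = \sum_i a i * a i +
     \sum_(q : 'I_k * 'I_k) (if q.1 == q.2 then 0 else a q.1 * a q.2).
Proof.
rewrite expr2 big_distrlr /=.
rewrite -(pair_bigA _ (fun i j => if i == j then 0 else a i * a j)) -big_split /=.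
apply: eq_bigr => i _; rewrite (bigD1 i) //= [X in _ = _ + X](bigD1 i) //= eqxx add0r.
congr (_ + _); apply: eq_bigr => j /negPf; by rewrite eq_sym => ->.
Qed.


Section L.
Variables (k : nat) (s : 'I_k -> R) (p : R).
Hypothesis hs : good s p.

Let a i := Num.sqrt (s i).
Let w (q : 'I_k * 'I_k) := if q.1 == q.2 then 0 else a q.1 * a q.2.

Lemma s0 i : 0 <= s i. Proof. by case: hs. Qed.

Lemma aa i : a i * a i = s i.
Proof. by rewrite -expr2 sqr_sqrtr // s0. Qed.

Lemma sumW : (\sum_i a i) ^+ 2 = 1 + \sum_q w q.
Proof.
rewrite sq_split; congr (_ + _); case: hs => _ <- _.
by apply: eq_bigr => i _; rewrite aa.
Qed.

Lemma sumV : 2 * \sum_q w q * w q = 2 * (1 - p).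
Proof.
congr (_ * _); case: hs => _ h1 h2.
have := sq_split s; rewrite h1 h2 expr1n => e.
have -> : 1 - p = \sum_(q : 'I_k * 'I_k) (if q.1 == q.2 then 0 else s q.1 * s q.2).
  by rewrite e addrC addKr.
apply: eq_bigr => q _; rewrite /w; case: eqP => _; rewrite ?mulr0 //.
by rewrite mulrACA !aa.
Qed.

Lemma w0 q : 0 <= w q.
Proof. by rewrite /w; case: eqP => _ //; apply: mulr_ge0; apply: sqrtr_ge0. Qed.

Lemma sumW0 : 0 <= \sum_q w q.
Proof. by apply: sumr_ge0 => q _; apply: w0. Qed.

Lemma L1 : 1 + Num.sqrt (2 * (1 - p)) <= (\sum_i Num.sqrt (s i)) ^+ 2.
Proof.
rewrite sumW lerD2l -sumV.
have hh : 2 * \sum_q w q * w q <= (\sum_q w q) ^+ 2.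
  apply: pair_sq; first exact: w0.
    by case=> x y; rewrite /w /= eq_sym; case: eqP => // _; rewrite mulrC.
  by case=> x y /= ->; rewrite /w eqxx.
apply: le_trans (ler_wsqrtr hh) _.
by rewrite sqrtr_sqr ger0_norm // sumW0.
Qed.


Lemma sum_two (F : 'I_k * 'I_k -> R) x y : x != y ->
  (forall q, q != (x, y) -> q != (y, x) -> F q = 0) ->
  \sum_q F q = F (x, y) + F (y, x).
Proof.
move=> nxy hF; rewrite (bigD1 (x, y)) //= (bigD1 (y, x)) /=; last first.
  by rewrite xpair_eqE negb_and eq_sym nxy.
rewrite big1 ?addr0 // => q /andP [h1 h2]; exact: hF.
Qed.

Lemma wS x y : w (x, y) = w (y, x).
Proof. by rewrite /w /= eq_sym; case: eqP => // _; rewrite mulrC. Qed.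

Lemma w_supp q : w q != 0 -> [/\ q.1 != q.2, s q.1 != 0 & s q.2 != 0].
Proof.
rewrite /w; case: (q.1 =P q.2) => [_|ne]; first by move/eqP.
rewrite mulf_eq0 negb_or => /andP [h1 h2]; split; first by apply/eqP.
  by apply: contra h1 => /eqP e; rewrite /a e sqrtr0.
by apply: contra h2 => /eqP e; rewrite /a e sqrtr0.
Qed.

Lemma L2 : (#|[set i | s i != 0%R]| <= 2)%N ->
  (\sum_i Num.sqrt (s i)) ^+ 2 <= 1 + Num.sqrt (2 * (1 - p)).
Proof.
move=> hS; rewrite sumW lerD2l -sumV.
suff key : (\sum_q w q) ^+ 2 <= 2 * \sum_q w q * w q.
  apply: le_trans (ler_wsqrtr key).
  by rewrite sqrtr_sqr ger0_norm // sumW0.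
set S := [set i | s i != 0] in hS.
have hw2 : 0 <= 2 * \sum_q w q * w q.
  by apply: mulr_ge0 => //; apply: sumr_ge0 => q _; apply: mulr_ge0; apply: w0.
have [/eqP e2|ne2] := eqVneq #|S| 2%N.
  have /cards2P [x [y [nxy eS]]] := e2.
  have hF : forall q, q != (x, y) -> q != (y, x) -> w q = 0.
    move=> [u v] h1 h2; apply/eqP; apply: contraT => /w_supp [/= nuv su sv].
    have : u \in S by rewrite inE.
    have : v \in S by rewrite inE.
    rewrite eS !inE => /orP [] /eqP ev /orP [] /eqP eu; subst u v;
      by rewrite ?eqxx in nuv h1 h2.
  rewrite (sum_two nxy hF) (sum_two (F := fun q => w q * w q) nxy); last first.
    by move=> q h1 h2; rewrite hF // mul0r.
  rewrite wS; nra.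
have hz : forall q, w q = 0.
  move=> [u v]; apply/eqP; apply: contraT => /w_supp [/= nuv su sv].
  have : (#|[set u; v]| <= #|S|)%N.
    by apply: subset_leq_card; apply/subsetP => z; rewrite !inE => /orP [] /eqP ->.
  rewrite cards2 nuv => h.
  have : #|S| = 2%N by apply/eqP; rewrite eqn_leq hS h.
  by move/eqP; rewrite (negPf ne2).
by rewrite big1 ?expr2 ?mul0r // => q _; rewrite hz.
Qed.

End L.

Lemma sqrtD_le (x y : R) : Num.sqrt (x + y) <= Num.sqrt x + Num.sqrt y.
Proof.
have [hx|hx] := lerP x 0.
  rewrite (ler0_sqrtr hx) add0r; apply: ler_wsqrtr; lra.
have [hy|hy] := lerP y 0.
  rewrite (ler0_sqrtr hy) addr0; apply: ler_wsqrtr; lra.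
have sx := sqr_sqrtr (ltW hx); have sy := sqr_sqrtr (ltW hy).
have gx := sqrtr_ge0 x; have gy := sqrtr_ge0 y.
have h : x + y <= (Num.sqrt x + Num.sqrt y) ^+ 2.
  rewrite -{1}sx -{1}sy; nra.
apply: le_trans (ler_wsqrtr h) _; rewrite sqrtr_sqr ger0_norm //; lra.
Qed.

Lemma prod_le (A B c : R) : 0 <= A -> 0 <= B -> A ^+ 2 <= c -> B ^+ 2 <= c -> A * B <= c.
Proof. move=> hA hB h1 h2; nra. Qed.

Lemma prod_ge (A B c : R) : 0 <= A -> 0 <= B -> 0 <= c -> c <= A ^+ 2 -> c <= B ^+ 2 -> c <= A * B.
Proof.
move=> hA hB hc h1 h2.
have : c ^+ 2 <= (A * B) ^+ 2.
  rewrite exprMn; apply: le_trans (ler_pM hc hc h1 h2) _; lra.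
by rewrite ler_sqr // ?nnegrE // mulr_ge0.
Qed.

Lemma final_real (A1 B1 A2 B2 A3 B3 P1 P2 P3 : R) :
  0 <= A1 -> 0 <= B1 -> 0 <= A2 -> 0 <= B2 -> 0 <= A3 -> 0 <= B3 ->
  1 <= A1 ^+ 2 -> 1 <= B1 ^+ 2 ->
  A1 ^+ 2 <= 1 + Num.sqrt (2 * (1 - P1)) -> B1 ^+ 2 <= 1 + Num.sqrt (2 * (1 - P1)) ->
  1 + Num.sqrt (2 * (1 - P2)) <= A2 ^+ 2 -> 1 + Num.sqrt (2 * (1 - P2)) <= B2 ^+ 2 ->
  1 + Num.sqrt (2 * (1 - P3)) <= A3 ^+ 2 -> 1 + Num.sqrt (2 * (1 - P3)) <= B3 ^+ 2 ->
  P2 + P3 <= 1 + P1 ->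
  log2 (A1 * B1) - log2 (A2 * B2) <= log2 (A3 * B3).
Proof.
move=> a1 b1 a2 b2 a3 b3 l1 l1' u1 u1' l2 l2' l3 l3' hp.
set s1 := Num.sqrt _ in u1 u1'; set s2 := Num.sqrt _ in l2 l2'; set s3 := Num.sqrt _ in l3 l3'.
have g2 : 0 <= s2 by apply: sqrtr_ge0.
have g3 : 0 <= s3 by apply: sqrtr_ge0.
have T1le : A1 * B1 <= 1 + s1 by apply: prod_le.
have T1ge : 1 <= A1 * B1 by apply: prod_ge => //; lra.
have T2ge : 1 + s2 <= A2 * B2 by apply: prod_ge => //; lra.
have T3ge : 1 + s3 <= A3 * B3 by apply: prod_ge => //; lra.
have hs : s1 <= s2 + s3.
  apply: le_trans (sqrtD_le _ _); apply: ler_wsqrtr; lra.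
have hT : A1 * B1 <= (A2 * B2) * (A3 * B3).
  apply: (le_trans T1le); apply: le_trans (ler_pM _ _ T2ge T3ge); nra.
have p1 : 0 < A1 * B1 by lra.
have p2 : 0 < A2 * B2 by lra.
have p3 : 0 < A3 * B3 by lra.
have l2pos : 0 < ln (2 : R) by rewrite ln_gt0 // ltr1n.
rewrite /log2 -mulrBl ler_pM2r ?invr_gt0 // lerBlDr -lnM ?posrE //.
have pp : 0 < A3 * B3 * (A2 * B2) by apply: mulr_gt0.
by rewrite ler_ln ?posrE // [X in _ <= X]mulrC.
Qed.

End P6.

Section P7.
Variable R : realType.
Local Notation C := R[i].
Variables (m n : nat) (psi : 'I_2 -> 'I_m -> 'I_n -> C).
Hypothesis hN : \sum_(a < 2) \sum_(b < m) \sum_(c < n) psi a b c * (psi a b c)^* = 1.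

Definition M1 (a : 'I_2) (y : 'I_n * 'I_m) := psi a y.2 y.1.
Definition M2 (x : 'I_2 * 'I_n) (b : 'I_m) := psi x.1 b x.2.
Definition M3 (x : 'I_2 * 'I_m) (c : 'I_n) := psi x.1 x.2 c.

Lemma nM1 : \sum_x \sum_y M1 x y * (M1 x y)^* = 1.
Proof. by rewrite -hN; apply: eq_bigr => a _; rewrite exchange_big pair_bigA. Qed.

Lemma nM2 : \sum_x \sum_y M2 x y * (M2 x y)^* = 1.
Proof.
rewrite -hN; symmetry.
transitivity (\sum_(a < 2) \sum_(c < n) \sum_(b < m) psi a b c * (psi a b c)^*).
  by apply: eq_bigr => a _; rewrite exchange_big.
by rewrite pair_bigA.
Qed.

Lemma nM3 : \sum_x \sum_y M3 x y * (M3 x y)^* = 1.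
Proof. by rewrite -hN [in RHS]pair_bigA. Qed.


Local Notation T := (('I_2 * 'I_m) * 'I_n)%type.
Definition pp (x : T) := psi x.1.1 x.1.2 x.2.
Definition Phi (q : T * T) := pp q.1 * pp q.2.
Definition swB (q : T * T) : T * T :=
  (((q.1.1.1, q.2.1.2), q.1.2), ((q.2.1.1, q.1.1.2), q.2.2)).
Definition swC (q : T * T) : T * T :=
  (((q.1.1.1, q.1.1.2), q.2.2), ((q.2.1.1, q.2.1.2), q.1.2)).
Definition G q := Phi q - Phi (swB q) - Phi (swC q) + Phi (swB (swC q)).

Lemma swBK : involutive swB. Proof. by case=> [[[a b] c] [[a' b'] c']]. Qed.
Lemma swCK : involutive swC. Proof. by case=> [[[a b] c] [[a' b'] c']]. Qed.

Lemma GB q : G (swB q) = - G q.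
Proof. case: q => [[[a b] c] [[a' b'] c']]; rewrite /G /Phi /pp /=; ring. Qed.
Lemma GC q : G (swC q) = - G q.
Proof. case: q => [[[a b] c] [[a' b'] c']]; rewrite /G /Phi /pp /=; ring. Qed.

Lemma hB : \sum_q Phi (swB q) * (G q)^* = - \sum_q Phi q * (G q)^*.
Proof.
rewrite (reindex_inj (inv_inj swBK)) /= -sumrN; apply: eq_bigr => q _.
by rewrite swBK GB rmorphN mulrN.
Qed.

Lemma hC : \sum_q Phi (swC q) * (G q)^* = - \sum_q Phi q * (G q)^*.
Proof.
rewrite (reindex_inj (inv_inj swCK)) /= -sumrN; apply: eq_bigr => q _.
by rewrite swCK GC rmorphN mulrN.
Qed.

Lemma hBC : \sum_q Phi (swB (swC q)) * (G q)^* = \sum_q Phi q * (G q)^*.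
Proof.
rewrite (reindex_inj (inv_inj swCK)) /=.
have -> : \sum_q Phi (swB (swC (swC q))) * (G (swC q))^* = - \sum_q Phi (swB q) * (G q)^*.
  by rewrite -sumrN; apply: eq_bigr => q _; rewrite swCK GC rmorphN mulrN.
by rewrite hB opprK.
Qed.

Lemma sumGG : \sum_q G q * (G q)^* = 4 * \sum_q Phi q * (G q)^*.
Proof.
have -> : \sum_q G q * (G q)^* = \sum_q Phi q * (G q)^* - \sum_q Phi (swB q) * (G q)^*
   - \sum_q Phi (swC q) * (G q)^* + \sum_q Phi (swB (swC q)) * (G q)^*.
  rewrite -!sumrB -big_split /=; apply: eq_bigr => q _; rewrite /G; ring.
rewrite hB hC hBC; ring.
Qed.

Lemma sumPhiG : \sum_q Phi q * (G q)^* = \sum_q Phi q * (Phi q)^* - \sum_q Phi q * (Phi (swB q))^*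
   - \sum_q Phi q * (Phi (swC q))^* + \sum_q Phi q * (Phi (swB (swC q)))^*.
Proof.
rewrite -!sumrB -big_split /=; apply: eq_bigr => q _; rewrite /G !rmorphD !rmorphN /=; ring.
Qed.


Lemma sumPhiPhi : \sum_q Phi q * (Phi q)^* = 1.
Proof.
have e : \sum_x pp x * (pp x)^* = 1 by rewrite -hN pair_bigA pair_bigA.
transitivity (\sum_x \sum_y (pp x * (pp x)^*) * (pp y * (pp y)^*)).
  rewrite pair_bigA; apply: eq_bigr => q _; rewrite /Phi rmorphM /=; ring.
by rewrite -big_distrlr /= e mul1r.
Qed.

Lemma sum4 (X Y : finType) (F : X -> X -> Y -> Y -> C) :
  \sum_x \sum_x' \sum_y \sum_y' F x x' y y' =
  \sum_(z : (X * X) * (Y * Y)) F z.1.1 z.1.2 z.2.1 z.2.2.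
Proof.
under eq_bigr do under eq_bigr do rewrite pair_bigA.
by rewrite pair_bigA pair_bigA.
Qed.

Lemma sum_bij (U V : finType) (h : V -> U) (g : U -> V) (F : U -> C) :
  cancel h g -> cancel g h -> \sum_u F u = \sum_v F (h v).
Proof. by move=> hg gh; rewrite (reindex h) //; exists g => ? ?. Qed.

Lemma Pur1 : Pur M1 = \sum_q Phi q * (Phi (swB (swC q)))^*.
Proof.
rewrite /Pur sum4.
rewrite (@sum_bij _ _ (fun q : T * T => ((q.1.1.1, q.2.1.1), ((q.1.2, q.1.1.2), (q.2.2, q.2.1.2))))
   (fun z => (((z.1.1, z.2.1.2), z.2.1.1), ((z.1.2, z.2.2.2), z.2.2.1)))); last 2 first.
- by case=> [[[a b] c] [[a' b'] c']].
- by case=> [[a a'] [[c b] [c' b']]].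
apply: eq_bigr => -[[[a b] c] [[a' b'] c']] _.
rewrite /Phi /pp /swB /swC /M1 /= !rmorphM /=; ring.
Qed.

Lemma Pur2 : Pur M2 = \sum_q Phi q * (Phi (swB q))^*.
Proof.
rewrite /Pur sum4.
rewrite (@sum_bij _ _ (fun q : T * T => (((q.1.1.1, q.1.2), (q.2.1.1, q.2.2)), (q.1.1.2, q.2.1.2)))
   (fun z => (((z.1.1.1, z.2.1), z.1.1.2), ((z.1.2.1, z.2.2), z.1.2.2)))); last 2 first.
- by case=> [[[a b] c] [[a' b'] c']].
- by case=> [[[a c] [a' c']] [b b']].
apply: eq_bigr => -[[[a b] c] [[a' b'] c']] _.
rewrite /Phi /pp /swB /swC /M2 /= !rmorphM /=; ring.
Qed.

Lemma Pur3 : Pur M3 = \sum_q Phi q * (Phi (swC q))^*.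
Proof.
rewrite /Pur sum4.
rewrite (@sum_bij _ _ (fun q : T * T => ((q.1.1, q.2.1), (q.1.2, q.2.2)))
   (fun z => ((z.1.1, z.2.1), (z.1.2, z.2.2)))); last 2 first.
- by case=> [[[a b] c] [[a' b'] c']].
- by case=> [[[a b] [a' b']] [c c']].
apply: eq_bigr => -[[[a b] c] [[a' b'] c']] _.
rewrite /Phi /pp /swB /swC /M3 /= !rmorphM /=; ring.
Qed.

Lemma ReB (x y : C) : complex.Re (x - y) = complex.Re x - complex.Re y.
Proof. by case: x; case: y. Qed.

Lemma purity : complex.Re (Pur M2) + complex.Re (Pur M3) <= 1 + complex.Re (Pur M1).
Proof.
have h0 : 0 <= \sum_q G q * (G q)^* by apply: sumr_ge0 => q _; apply: mul_conjC_ge0.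
rewrite sumGG sumPhiG sumPhiPhi -Pur1 -Pur2 -Pur3 pmulr_rge0 // in h0.
have := ge0_Re h0; rewrite !(ReD, ReB) /=.
set r1 := complex.Re (Pur M1); set r2 := complex.Re (Pur M2); set r3 := complex.Re (Pur M3).
move=> h; lra.
Qed.

End P7.

Unset Implicit Arguments.
Theorem theorem2 (R : realType) (m n : nat)
    (psi : 'I_2 -> 'I_m -> 'I_n -> R[i])
    (hnorm : \sum_(a < 2) \sum_(b < m) \sum_(c < n) `|psi a b c| ^+ 2 = 1) :
  log_negativity
      (pure_dm (fun p : 'I_2 * ('I_n * 'I_m) => psi p.1 p.2.2 p.2.1))
  - log_negativity
      (pure_dm (fun p : ('I_2 * 'I_n) * 'I_m => psi p.1.1 p.2 p.1.2))
  <= log_negativity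
      (pure_dm (fun p : ('I_2 * 'I_m) * 'I_n => psi p.1.1 p.1.2 p.2)).
Proof.
have hN : \sum_(a < 2) \sum_(b < m) \sum_(c < n) psi a b c * (psi a b c)^* = 1.
  rewrite -hnorm; apply: eq_bigr => a _; apply: eq_bigr => b _; apply: eq_bigr => c _.
  by rewrite normCK.
rewrite /log_negativity.
change (log2 (trace_norm (Kpt (M1 psi))) - log2 (trace_norm (Kpt (M2 psi)))
  <= log2 (trace_norm (Kpt (M3 psi)))).
have [s1 [t1 [e1 g1 g1' sp1 sp1']]] := bip_facts (nM1 hN).
have [s2 [t2 [e2 g2 g2' _ _]]] := bip_facts (nM2 hN).
have [s3 [t3 [e3 g3 g3' _ _]]] := bip_facts (nM3 hN).
have sp1a : (#|[set i | s1 i != 0%R]| <= 2)%N by rewrite (leq_trans sp1) // card_ord.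
have sp1b : (#|[set i | t1 i != 0%R]| <= 2)%N by rewrite (leq_trans sp1') // card_ord.
rewrite e1 e2 e3.
have sq0 k (s : 'I_k -> R) : 0 <= \sum_i Num.sqrt (s i).
  by apply: sumr_ge0 => i _; apply: sqrtr_ge0.
have lo k (s : 'I_k -> R) p : good s p -> 1 <= (\sum_i Num.sqrt (s i)) ^+ 2.
  move=> g; apply: le_trans (L1 g); rewrite lerDl; apply: sqrtr_ge0.
apply: (final_real (P1 := complex.Re (Pur (M1 psi))) (P2 := complex.Re (Pur (M2 psi))) (P3 := complex.Re (Pur (M3 psi)))); rewrite ?sq0 ?(lo _ _ _ g1) ?(lo _ _ _ g1') //.
- exact: L2 g1 sp1a.
- exact: L2 g1' sp1b.
- exact: L1 g2.
- exact: L1 g2'.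
- exact: L1 g3.
- exact: L1 g3'.
- exact: purity hN.
Qed.
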